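(* Let $\rho_2>0$. Let $\{P_t(n)\}_{t\ge0}$, $n\in\mathbb N$, be independent Poisson processes of rate $2\rho_2$; for each $t\ge0$ define $\xi_t(0)=1$, $\xi_t(n+1)=\xi_t(n)+(P_t(n+1)-1)\mathbf 1_{\{n<M_t\}}$, where $M_t=\inf\{n\ge0:\xi_t(n)=0\}\in\mathbb N\cup\{\infty\}$. Let $g_2(s)=\inf\{x\in(0,1): -\log(1-x)/(2\rho_2x)>s\}$ for $s\ge0$. Then $\mathbb P(M_t=\infty)=g_2(t)$ for every $t\ge0$, and $\chi=\inf\{t\ge0: M_t=\infty\}$ is a continuous random variable with distribution function $g_2$. *)

(* Defs.v *)
From HB Require Import structures.
From mathcomp Require Import all_boot all_order all_algebra.
From mathcomp Require Import all_classical all_reals all_analysis measurable_realfun.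
Set Implicit Arguments. Unset Strict Implicit. Unset Printing Implicit Defensive.
Import Order.TTheory GRing.Theory Num.Theory.
Local Open Scope classical_set_scope.
Local Open Scope ring_scope.

(* A family X : nat -> R -> T -> nat of independent Poisson processes of rate
   lam on the probability space (T, P):
   - every sample path t |-> X n t w (t >= 0) is a counting path:
     starts at 0, nondecreasing, right-continuous;
   - all the X n t are random variables (events {X n t = k} measurable);
   - finite-dimensional distributions: for all N, all strictly increasing
     times 0 <= tt 0 < tt 1 < ... < tt m and all k, the increments
     X n (tt j.+1) - X n (tt j) (n < N, j < m) are jointly independent
     Poisson(lam * (tt j.+1 - tt j)). *)
Definition indep_poisson_processes {d} {T : measurableType d} {R : realType}
    (P : probability T R) (lam : R) (X : nat -> R -> T -> nat) : Prop :=
  [/\ (forall n w, X n 0 w = 0%N),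
      (forall n w s t, 0 <= s -> s <= t -> (X n s w <= X n t w)%N),
      (forall n w t, 0 <= t -> exists2 e : R, 0 < e &
          forall s, t <= s -> s < t + e -> X n s w = X n t w),
      (forall n t k, 0 <= t -> measurable [set w | X n t w = k]) &
      (forall (N m : nat) (tt : nat -> R) (k : nat -> nat -> nat),
          0 <= tt 0%N -> (forall j, (j < m)%N -> tt j < tt j.+1) ->
          P (\big[setI/setT]_(n < N) \big[setI/setT]_(j < m)
                [set w | X n (tt j.+1) w = (X n (tt j) w + k n j)%N])
          = (\prod_(n < N) \prod_(j < m)
                poisson_pmf (lam * (tt j.+1 - tt j)) (k n j))%:E)].

(* xi_alive Pt n = (xi(n), [n < M]) where xi(0) = 1,
   xi(n+1) = xi(n) + (Pt(n+1) - 1) * 1_{n < M},  M = inf{n : xi(n) = 0}.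
   n < M  iff  xi(m) != 0 for all m <= n. *)
Fixpoint xi_alive (Pt : nat -> nat) (n : nat) : int * bool :=
  match n with
  | 0%N => (1%:Z, true)
  | n'.+1 =>
      let: (x, a) := xi_alive Pt n' in
      let x' := x + ((Pt n)%:Z - 1) * (a%:R) in
      (x', a && (x' != 0))
  end.

Definition xi (Pt : nat -> nat) (n : nat) : int := (xi_alive Pt n).1.

Definition M_infinite (Pt : nat -> nat) : Prop := forall n, xi Pt n != 0.

Definition g2 {R : realType} (rho s : R) : R :=
  inf [set x : R | 0 < x < 1 /\ s < - ln (1 - x) / (2 * rho * x)].

Definition chi {T : Type} {R : realType} (X : nat -> R -> T -> nat) (w : T)
  : \bar R :=
  ereal_inf [set (t%:E)%E | t in [set t : R | 0 <= t /\ M_infinite (fun n => X n t w)]].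

(* Main.v *)
Require Import Defs.
From HB Require Import structures.
From mathcomp Require Import all_boot all_order all_algebra.
From mathcomp Require Import all_classical all_reals all_analysis measurable_realfun.
From mathcomp Require Import ring lra zify.
Set Implicit Arguments. Unset Strict Implicit. Unset Printing Implicit Defensive.
Import Order.TTheory GRing.Theory Num.Theory.
Import numFieldNormedType.Exports.
Local Open Scope classical_set_scope.
Local Open Scope ring_scope.
Section real.
Context {R : realType}.

Lemma expR_conv (t u v : R) : 0 <= t -> t <= 1 ->
  expR (t * u + (1 - t) * v) <= t * expR u + (1 - t) * expR v.
Proof.
move=> t0 t1; have := convex_expR (Itv01 t0 t1) u v.
by rewrite !convRE /=.
Qed.

Lemma cont_phi (lam : R) : continuous (fun z : R => expR (lam * (z - 1)) - z).
Proof.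
move=> z; apply: cvgB; last exact: cvg_id.
apply: (@cvg_comp _ _ _ (fun z => lam * (z - 1)) expR); last exact: continuous_expR.
by apply: cvgM; [exact: cvg_cst|apply: cvgB; [exact: cvg_id|exact: cvg_cst]].
Qed.

Lemma char_fix (lam g : R) : 0 < lam -> 0 < g -> g <= 1 ->
  expR (lam * (g - 1)) <= g ->
  (forall y, 0 <= y -> y <= 1 -> expR (lam * (y - 1)) = y -> g <= y) ->
  forall y, 0 < y -> y < 1 -> (y < expR (lam * (y - 1)) <-> y < g).
Proof.
move=> lam0 g0 g1 fg gmin y y0 y1; split => H.
  rewrite ltNge; apply/negP => gy.
  have [gy'|gy'] := eqVneq g y.
    by move: H; rewrite -gy' ltNge fg.
  have gy2 : g < y by rewrite lt_neqAle gy' gy.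
  set a := (1 - y) / (1 - g).
  have g1' : g < 1 by apply: lt_trans y1.
  have a0 : 0 <= a by rewrite divr_ge0 // subr_ge0 ltW.
  have a1 : a <= 1 by rewrite ler_pdivrMr ?subr_gt0 // mul1r lerD2l lerN2 ltW.
  have ya : y = a * g + (1 - a) * 1.
    rewrite /a; field; by rewrite subr_eq0 eq_sym lt_eqF.
  have := expR_conv (lam * (g - 1)) 0 a0 a1.
  rewrite mulr0 addr0 expR0 mulr1.
  have -> : a * (lam * (g - 1)) = lam * (y - 1) by rewrite ya; ring.
  move=> hc; move: H; rewrite ltNge => /negP; apply.
  apply: (le_trans hc); rewrite [leRHS]ya mulr1 lerD2r.
  by rewrite ler_wpM2l.
rewrite ltNge; apply/negP => fy.
have [c cin fc] : exists2 c, c \in `[0, y] & expR (lam * (c - 1)) - c = 0.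
  apply: IVT; first exact: ltW.
    by apply: continuous_subspaceT; exact: cont_phi.
  have p0 : 0 < expR (lam * (0 - 1)) - 0 by rewrite subr0 expR_gt0.
  have py : expR (lam * (y - 1)) - y <= 0 by rewrite subr_le0.
  by rewrite ge_min le_max py (ltW p0) orbT.
move: cin; rewrite in_itv /= => /andP[c0 cy].
have := gmin c c0 (le_trans cy (ltW y1)).
move/eqP: fc; rewrite subr_eq0 => /eqP fc.
by move=> /(_ fc) gc; move: H; rewrite ltNge (le_trans gc cy).
Qed.

Definition hh (rho x : R) := - ln (1 - x) / (2 * rho * x).

Lemma hh_pos rho x : 0 < rho -> 0 < x < 1 -> 0 < hh rho x.
Proof.
move=> r0 /andP[x0 x1]; rewrite /hh divr_gt0 //; last by rewrite !mulr_gt0.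
by rewrite oppr_gt0 ln_lt0 // subr_gt0 x1 ltrBlDr ltrDl x0.
Qed.

Lemma S_equiv rho s x : 0 < rho -> 0 < x < 1 ->
  (s < hh rho x) <-> (1 - x < expR (2 * rho * s * ((1 - x) - 1))).
Proof.
move=> r0 /andP[x0 x1]; rewrite /hh ltr_pdivlMr; last by rewrite !mulr_gt0.
have -> : 2 * rho * s * (1 - x - 1) = - (s * (2 * rho * x)) by ring.
rewrite -[in X in _ <-> X](@lnK _ (1 - x)); last by rewrite posrE subr_gt0.
by rewrite ltr_expR ltrNr.
Qed.

Lemma hh_eq rho s x : 0 < rho -> 0 < x < 1 -> hh rho x = s ->
  1 - x = expR (- (2 * rho * s) * x).
Proof.
move=> r0 /andP[x0 x1] H.
have H' : - ln (1 - x) = s * (2 * rho * x).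
  by rewrite -H /hh divfK // gt_eqF // !mulr_gt0.
have -> : - (2 * rho * s) * x = ln (1 - x) by rewrite -[ln _]opprK H'; ring.
by rewrite lnK // posrE subr_gt0.
Qed.

Lemma g2_struct rho s c : 0 <= c -> c < 1 ->
  (forall x, 0 < x < 1 -> (s < hh rho x <-> c < x)) -> g2 rho s = c.
Proof.
move=> c0 c1 H; rewrite /g2.
rewrite (_ : [set x | _] = `]c, 1[%classic); first by apply: inf_itv; rewrite bnd_simp.
apply/seteqP; split => x /=; rewrite in_itv /=.
  by move=> [x01 hx]; have := (H x x01).1 hx => cx; rewrite cx; case/andP: x01.
move=> /andP[cx x1]; have x01 : 0 < x < 1 by rewrite x1 (le_lt_trans c0 cx).
by split => //; apply/(H x x01).
Qed.

Lemma g2_neg rho s : 0 < rho -> s <= 0 ->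
  (forall x, 0 < x < 1 -> (s < hh rho x <-> 0 < x)) /\ g2 rho s = 0.
Proof.
move=> r0 s0.
have H : forall x, 0 < x < 1 -> (s < hh rho x <-> 0 < x).
  move=> x x01; split => _; first by case/andP: x01.
  exact: le_lt_trans s0 (hh_pos r0 x01).
by split => //; apply: g2_struct.
Qed.

Definition gprop (lam g : R) := [/\ 0 < g, g <= 1, expR (lam * (g - 1)) <= g &
  (forall y, 0 <= y -> y <= 1 -> expR (lam * (y - 1)) = y -> g <= y)].

Lemma g2_pos rho s g : 0 < rho -> 0 < s -> gprop (2 * rho * s) g ->
  (forall x, 0 < x < 1 -> (s < hh rho x <-> 1 - g < x)) /\ g2 rho s = 1 - g.
Proof.
move=> r0 s0 [g0 g1 fg gmin].
have H : forall x, 0 < x < 1 -> (s < hh rho x <-> 1 - g < x).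
  move=> x x01; rewrite S_equiv //.
  have /andP[x0 x1] := x01.
  have hy0 : 0 < 1 - x by rewrite subr_gt0.
  have hy1 : 1 - x < 1 by rewrite ltrBlDr ltrDl.
  have hl : 0 < 2 * rho * s by rewrite !mulr_gt0.
  rewrite (char_fix hl g0 g1 fg gmin hy0 hy1).
  by rewrite ltrBlDl addrC -ltrBlDl.
split => //; apply: g2_struct => //; first by rewrite subr_ge0.
by rewrite ltrBlDl ltrDr.
Qed.

Section cont.
Variable rho : R.
Hypothesis r0 : 0 < rho.
Hypothesis Hall : forall s, exists c, [/\ 0 <= c, c < 1, g2 rho s = c &
  forall x, 0 < x < 1 -> (s < hh rho x <-> c < x)].

Lemma g2_01 s : 0 <= g2 rho s /\ g2 rho s < 1.
Proof. by have [c [c0 c1 -> _]] := Hall s. Qed.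

Lemma g2_mono s s' : s <= s' -> g2 rho s <= g2 rho s'.
Proof.
move=> ss'; have [c [c0 c1 -> Hc]] := Hall s; have [c' [c0' c1' -> Hc']] := Hall s'.
rewrite leNgt; apply/negP => c'c.
have x01 : 0 < (c' + c) / 2 < 1 by apply/andP; split; lra.
have hx : s' < hh rho ((c' + c) / 2) by apply/(Hc' _ x01); lra.
have := (Hc _ x01).1 (le_lt_trans ss' hx); lra.
Qed.

Lemma g2_right s e : 0 < e -> exists2 d, 0 < d & g2 rho (s + d) <= g2 rho s + e.
Proof.
move=> e0; have [c [c0 c1 -> Hc]] := Hall s.
have [m [m0 me m1]] : exists m, [/\ 0 < m, m <= e & m <= 1 - c].
  exists (Num.min e (1 - c)); split.
  - by rewrite lt_min e0 subr_gt0.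
  - by rewrite ge_min lexx.
  - by rewrite ge_min lexx orbT.
have x01 : 0 < c + m / 2 < 1 by apply/andP; split; lra.
have hx : s < hh rho (c + m / 2) by apply/(Hc _ x01); lra.
exists ((hh rho (c + m / 2) - s) / 2); first lra.
have [c' [c0' c1' -> Hc']] := Hall (s + (hh rho (c + m / 2) - s) / 2).
have := (Hc' _ x01).1 ltac:(lra).
lra.
Qed.
Lemma g2_left s e : 0 < s -> 0 < e ->
  exists d, [/\ 0 < d, d <= s & g2 rho s - e <= g2 rho (s - d)].
Proof.
move=> s0 e0; case: (pselect (exists d, [/\ 0 < d, d <= s & g2 rho s - e <= g2 rho (s - d)])) => // hno.
exfalso.
have hno' : forall d, 0 < d -> d <= s -> g2 rho (s - d) < g2 rho s - e.
  move=> d d0 ds; rewrite ltNge; apply/negP => hd; apply: hno; by exists d.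
have [c [c0 c1 gc Hc]] := Hall s.
have ce : 0 < c - e.
  have := hno' s s0 (lexx s); rewrite subrr gc.
  by have [c'' [c0'' _ -> _]] := Hall 0; lra.
have key : forall x, c - e < x -> x < c -> hh rho x = s.
  move=> x x1 x2.
  have x01 : 0 < x < 1 by apply/andP; split; lra.
  apply/eqP; rewrite eq_le; apply/andP; split.
    rewrite leNgt; apply/negP => /(Hc x x01).1; lra.
  rewrite leNgt; apply/negP => hxs.
  have hpos := hh_pos r0 x01.
  have := hno' (s - hh rho x) ltac:(lra) ltac:(lra).
  rewrite (_ : s - (s - hh rho x) = hh rho x); last by ring.
  have [c'' [c0'' c1'' -> Hc'']] := Hall (hh rho x).
  rewrite gc => hc''.
  have := (Hc'' x x01).2 ltac:(lra); lra.
have [d [d0 de]] : exists d, 0 < d /\ e = 4 * d by exists (e / 4); split; lra.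
have y1 : 0 < c - 3 * d < 1 by apply/andP; split; lra.
have y2 : 0 < c - 2 * d < 1 by apply/andP; split; lra.
have y3 : 0 < c - d < 1 by apply/andP; split; lra.
have k1 : hh rho (c - 3 * d) = s by apply: key; lra.
have k2 : hh rho (c - 2 * d) = s by apply: key; lra.
have k3 : hh rho (c - d) = s by apply: key; lra.
have E1 := hh_eq r0 y1 k1.
have E2 := hh_eq r0 y2 k2.
have E3 := hh_eq r0 y3 k3.
have E : (1 - (c - 2 * d)) * (1 - (c - 2 * d)) = (1 - (c - 3 * d)) * (1 - (c - d)).
  rewrite E1 E2 E3 -!expRD; congr expR; ring.
have dd : d * d = 0.
  have : (1 - (c - 2 * d)) * (1 - (c - 2 * d)) - (1 - (c - 3 * d)) * (1 - (c - d)) = d * d by ring.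
  by rewrite E subrr => <-.
have := mulr_gt0 d0 d0; lra.
Qed.
End cont.
End real.
Section comb.
Context {R : realType} (lam : R) (lam0 : 0 < lam).
Local Open Scope ereal_scope.
Definition pe j : \bar R := (poisson_pmf lam j)%:E.
Lemma pe_ge0 j : 0 <= pe j.
Proof. by rewrite lee_fin poisson_pmf_ge0. Qed.

Lemma PS (x : R) : (0 <= x)%R ->
  \sum_(j <oo) pe j * (x ^+ j)%:E = (expR (lam * (x - 1)))%:E.
Proof.
move=> x0.
under eq_eseriesr.
  move=> n _; rewrite /pe /poisson_pmf lam0 -EFinM.
  rewrite (_ : (lam ^+ n * (n`!%:R)^-1 * expR (- lam) * x ^+ n)%R = expR (- lam) * ((n`!%:R)^-1 * (lam * x) ^+ n))%R; last first.
    rewrite exprMn; set a := (lam ^+ n)%R; set b := (x ^+ n)%R; set c := (n`!%:R)^-1%R; set e := expR _; ring.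
  rewrite EFinM; over.
rewrite /= nneseriesZl/=; last first.
  by move=> n _; rewrite lee_fin mulr_ge0 ?invr_ge0// exprn_ge0// mulr_ge0// ltW.
rewrite (_ : (lam * (x - 1) = - lam + lam * x)%R); last by ring.
rewrite expRD EFinM; congr (_ * _).
rewrite expRE -EFin_lim; last first.
  by rewrite /pseries -exp_coeffE; apply: is_cvg_series_exp_coeff.
apply/congr_lim/funext => n/=; rewrite /pseries/= /series/= -sumEFin//.
Qed.

Lemma sum_pe : \sum_(j <oo) pe j = 1.
Proof.
have := PS (@ler01 R); under eq_eseriesr do rewrite expr1n mule1.
by move=> ->; rewrite subrr mulr0 expR0.
Qed.

Fixpoint F (n k : nat) : \bar R := match n with
| 0 => if k is 0 then 1 else 0
| n'.+1 => if k is k'.+1 then \sum_(j <oo) pe j * F n' (k' + j)%N else 1 end.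

Fixpoint D (m a : nat) : \bar R := match m with
| 0 => if a is 0 then 1 else 0
| m'.+1 => if a is a'.+1 then \sum_(j <oo) pe j * D m' (a' + j)%N else 0 end.

Lemma F_ge0 n k : 0 <= F n k.
Proof.
elim: n k => [|n IH] [|k] //=.
by apply: nneseries_ge0 => j _ _; rewrite mule_ge0 ?pe_ge0.
Qed.

Lemma D_ge0 m a : 0 <= D m a.
Proof.
elim: m a => [|n IH] [|k] //=.
by apply: nneseries_ge0 => j _ _; rewrite mule_ge0 ?pe_ge0.
Qed.

Lemma F_le1 n k : F n k <= 1.
Proof.
elim: n k => [|n IH] [|k] //=.
rewrite -sum_pe; apply: lee_nneseries => [j _ _|j _].
  by rewrite mule_ge0 ?pe_ge0 ?F_ge0.
by rewrite -{2}(mule1 (pe j)) lee_wpmul2l ?pe_ge0.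
Qed.

Lemma F_fin n k : F n k = (fine (F n k))%:E.
Proof.
rewrite fineK // ge0_fin_numE ?F_ge0 //.
by rewrite (le_lt_trans (F_le1 n k)) // ltry.
Qed.

Lemma F_n0 n : F n 0%N = 1.
Proof. by case: n. Qed.

Lemma F_mono1 n k : F n k <= F n.+1 k.
Proof.
elim: n k => [|n IH] [|k] //=.
  by apply: nneseries_ge0 => j _ _; apply: mule_ge0; [exact: pe_ge0|exact: (F_ge0 0 _)].
apply: lee_nneseries => [j _ _|j _]; first by rewrite mule_ge0 ?pe_ge0 ?F_ge0.
exact: (lee_wpmul2l (pe_ge0 _) (IH _)).
Qed.

Lemma F_mono n n' k : (n <= n')%N -> F n k <= F n' k.
Proof.
move=> /subnKC <-; elim: (n' - n)%N => [|d IH]; first by rewrite addn0.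
by rewrite addnS (le_trans IH) // F_mono1.
Qed.

Lemma F_fix (y : R) n k : (0 <= y)%R -> expR (lam * (y - 1)) = y ->
  F n k <= (y ^+ k)%:E.
Proof.
move=> y0 fy; elim: n k => [|n IH] [|k] //=.
- by rewrite lee_fin exprn_ge0.
apply: (@le_trans _ _ (\sum_(j <oo) (y ^+ k)%:E * (pe j * (y ^+ j)%:E))).
  apply: lee_nneseries => [j _ _|j _]; first by rewrite mule_ge0 ?pe_ge0 ?F_ge0.
  rewrite [X in _ <= X]muleCA -EFinM -exprD EFinM -/(pe j); apply: lee_wpmul2l; [exact: pe_ge0|exact: IH].
rewrite (@nneseriesZl R (fun j => pe j * (y ^+ j)%:E)); last by move=> j _; rewrite mule_ge0 ?pe_ge0 // lee_fin exprn_ge0.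
by rewrite PS // fy -EFinM exprSr.
Qed.

Lemma FD n a b : F n (a + b)%N = \sum_(m < n.+1) D m a * F (n - m)%N b.
Proof.
elim: n a => [|n IH] a.
  rewrite big_ord_recl big_ord0 adde0 /=.
  by case: a => [|a] /=; rewrite ?mul1e ?mul0e.
case: a => [|a].
  rewrite big_ord_recl big1 ?adde0 /= ?mul1e // => i _.
  by rewrite mul0e.
rewrite big_ord_recl /= mul0e add0e.
transitivity (\sum_(j <oo) \sum_(i < n.+1) pe j * (D i (a + j)%N * F (n - i)%N b)).
  apply: eq_eseriesr => j _; rewrite addnAC IH ge0_sume_distrr //.
  by move=> i _; rewrite mule_ge0 ?D_ge0 ?F_ge0.
rewrite nneseries_sum; last by move=> i j _; rewrite !mule_ge0 ?pe_ge0 ?D_ge0 ?F_ge0.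
apply: eq_bigr => i _; rewrite /bump leq0n add1n subSS add0n.
rewrite F_fin muleC -(@nneseriesZl R (fun j => pe j * D i (a + j)%N)); last first.
  by move=> j _; rewrite mule_ge0 ?pe_ge0 ?D_ge0.
apply: eq_eseriesr => j _; rewrite -F_fin.
by rewrite muleA muleC.
Qed.

Lemma F_super n1 n2 a b : F n1 a * F n2 b <= F (n1 + n2)%N (a + b)%N.
Proof.
have -> : F n1 a = (\sum_(m < n1.+1) D m a)%E.
  rewrite -[a]addn0 FD addn0; apply: eq_bigr => i _; by rewrite F_n0 mule1.
rewrite (FD (n1 + n2) a b) ge0_sume_distrl; last by move=> i _; exact: D_ge0.
apply: (@le_trans _ _ (\sum_(m < n1.+1) D m a * F (n1 + n2 - m)%N b)).
  apply: lee_sum => i _; rewrite lee_wpmul2l ?D_ge0 // F_mono //.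
  by have := ltn_ord i; lia.
apply: (@lee_sum_nneg_ord R (fun m => D m a * F (n1 + n2 - m)%N b) (fun _ => true)) => //.
  by move=> m _; rewrite mule_ge0 ?D_ge0 ?F_ge0.
by lia.
Qed.

Lemma series_le (f : nat -> \bar R) (x : \bar R) : (forall j, 0 <= f j) ->
  (forall J, \sum_(0 <= j < J) f j <= x) -> \sum_(j <oo) f j <= x.
Proof.
move=> f0 H.
have := @ereal_nondecreasing_series R f xpredT 0%N (fun n _ _ => f0 n).
move/ereal_nondecreasing_cvgn/cvg_lim => -> //.
by apply: ge_ereal_sup => _ [J _ <-]; exact: H.
Qed.

Lemma G_props : exists g : R,
  [/\ ereal_sup (range (fun n => F n 1%N)) = g%:E, (0 < g)%R, (g <= 1)%R,
      (expR (lam * (g - 1)) <= g)%R &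
      forall y, (0 <= y)%R -> (y <= 1)%R -> expR (lam * (y - 1)) = y -> (g <= y)%R].
Proof.
set Ge := ereal_sup _.
have Gub : forall y : R, (0 <= y)%R -> expR (lam * (y - 1)) = y -> Ge <= y%:E.
  move=> y y0 fy; apply: ge_ereal_sup => _ [n _ <-].
  by have := F_fix n 1 y0 fy; rewrite expr1.
have G1 : Ge <= 1 by apply: Gub => //; rewrite subrr mulr0 expR0.
have G0 : 0 <= Ge by apply: (le_trans (F_ge0 0 1)); apply: ereal_sup_ubound; exists 0%N.
have Gfin : Ge \is a fin_num by rewrite ge0_fin_numE // (le_lt_trans G1) ?ltry.
set g := fine Ge.
have Gg : Ge = g%:E by rewrite /g fineK.
set u := fun n => fine (F n 1%N).
have Fu : forall n, F n 1%N = (u n)%:E by move=> n; rewrite /u -F_fin.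
have u0 : forall n, (0 <= u n)%R by move=> n; rewrite -lee_fin -Fu F_ge0.
have pw : forall N j, ((u N) ^+ j)%:E <= F (j * N)%N j.
  move=> N; elim => [|j IH]; first by rewrite expr0 mul0n.
  rewrite mulSn -add1n exprS EFinM -Fu.
  apply: le_trans (F_super N (j * N) 1 j).
  by apply: lee_wpmul2l => //; exact: F_ge0.
have key' : forall N, (expR (lam * (u N - 1)))%:E <= Ge.
  move=> N; rewrite -PS //.
  apply: series_le => [j|J]; first by rewrite mule_ge0 ?pe_ge0 // lee_fin exprn_ge0.
  apply: (le_trans _ (ereal_sup_ubound (ex_intro2 _ _ (J * N).+1 I erefl))).
  rewrite /= -/(pe _).
  apply: (le_trans _ (@nneseries_lim_ge R (fun j => pe j * F (J * N)%N (0 + j)%N) xpredT 0%N J _)); last first.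
    by move=> n _ _; rewrite mule_ge0 ?pe_ge0 ?F_ge0.
  rewrite big_nat_cond [X in _ <= X]big_nat_cond; apply: lee_sum => j /andP[/andP[_ jJ] _].
  apply: lee_wpmul2l; first exact: pe_ge0.
  rewrite add0n; apply: (le_trans (pw N j)); apply: F_mono.
  by rewrite leq_mul2r ltnW ?orbT.
have key : forall N, (expR (lam * (u N - 1)) <= g)%R.
  by move=> N; rewrite -lee_fin -Gg.
exists g; split => //.
- by apply: lt_le_trans (key 0%N); exact: expR_gt0.
- by rewrite -lee_fin -Gg.
- rewrite leNgt; apply/negP => gE.
  set E := expR (lam * (g - 1)) in gE.
  have E0 : (0 < E)%R by exact: expR_gt0.
  set d := ((E - g) / (2 * E * lam))%R.
  have d0 : (0 < d)%R by rewrite divr_gt0 ?subr_gt0 // !mulr_gt0.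
  have [_ [N _ <-]] := ub_ereal_sup_adherent d0 Gfin.
  rewrite -/Ge Gg Fu -EFinB lte_fin => hN.
  have : (E * expR (- lam * d) <= g)%R.
    apply: le_trans (key N); rewrite /E -expRD ler_expR.
    have -> : (lam * (g - 1) + - lam * d = lam * (g - d - 1))%R by ring.
    by rewrite ler_pM2l //; lra.
  have := expR_ge1Dx (- lam * d).
  have Eld : (E * (lam * d) = (E - g) / 2)%R.
    by rewrite /d; field; rewrite !gt_eqF.
  move=> h1 h2.
  have h3 : (E * (1 + - lam * d) <= g)%R.
    by apply: le_trans h2; rewrite ler_pM2l.
  have h4 : (E * (1 + - lam * d) = E - (E - g) / 2)%R by rewrite -Eld; ring.
  move: h3; rewrite h4; lra.
- by move=> y y0 y1 fy; rewrite -lee_fin -Gg; apply: Gub.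
Qed.
End comb.
Fixpoint hit (Pt : nat -> nat) (n k i : nat) : bool := match n with
  | 0 => k == 0%N
  | n'.+1 => (k == 0%N) || hit Pt n' (k.-1 + Pt i)%N i.+1 end.

Lemma hit0 Pt n i : hit Pt n 0 i.
Proof. by case: n. Qed.

Lemma hit_monoS Pt n k i : hit Pt n k i -> hit Pt n.+1 k i.
Proof.
elim: n k i => [|n IH] k i; first by move=> h; apply/orP; left; exact: h.
move=> /orP [h|/IH h]; apply/orP; [left|right]; exact: h.
Qed.

Lemma hit_mono Pt n n' k i : (n <= n')%N -> hit Pt n k i -> hit Pt n' k i.
Proof.
move=> /subnKC <-; elim: (n' - n)%N => [|d IH]; first by rewrite addn0.
by move=> h; rewrite addnS; apply: hit_monoS; apply: IH.
Qed.

Lemma hit_monoP Pt Pt' n k k' i : (forall l, (Pt l <= Pt' l)%N) -> (k <= k')%N ->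
  hit Pt' n k' i -> hit Pt n k i.
Proof.
move=> HP; elim: n k k' i => [|n IH] k k' i kk' /=.
  by move/eqP => k0; move: kk'; rewrite k0 leqn0.
case/orP => [/eqP k0|h]; first by move: kk'; rewrite k0 leqn0 => ->.
apply/orP; right; apply: IH h.
by have := HP i; move: kk'; case: k; case: k' => /=; lia.
Qed.

Lemma xa_inv Pt m : let xa := xi_alive Pt m in
  (xa.2 -> exists k, xa.1 = (k.+1)%:Z) /\ (~~ xa.2 -> xa.1 = 0).
Proof.
elim: m => [|m [IH1 IH2]] /=; first by split => // _; exists 0%N.
move: IH1 IH2; case: (xi_alive Pt m) => x a /= IH1 IH2.
case: a IH1 IH2 => /= [IH1 _|_ IH2].
  have [k ->] := IH1 isT; rewrite mulr1.
  by split => [/eqP h|/negPn /eqP //]; exists (k + Pt m.+1 - 1)%N; move: h; lia.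
by rewrite IH2 // mulr0 addr0.
Qed.

Lemma xa_dead Pt m n : ~~ (xi_alive Pt m).2 -> ~~ (xi_alive Pt (m + n)).2.
Proof.
move=> h; elim: n => [|n IH]; first by rewrite addn0.
by rewrite addnS /=; move: IH; case: (xi_alive Pt (m + n)) => x a /= /negbTE ->.
Qed.

Lemma xi_hit Pt n m k : xi_alive Pt m = ((k.+1)%:Z, true) ->
  (~~ (xi_alive Pt (m + n)).2) = hit Pt n k.+1 m.+1.
Proof.
elim: n m k => [|n IH] m k h; first by rewrite addn0 h.
rewrite /= addnS -addSn.
case E : (k + Pt m.+1)%N => [|k'].
  rewrite hit0; apply: xa_dead => /=; rewrite h /= mulr1.
  by apply/negPn; move: E; lia.
rewrite (IH m.+1 k') //= h /= mulr1.
have -> : ((k.+1)%:Z + ((Pt m.+1)%:Z - 1) = (k'.+1)%:Z)%R by move: E; lia.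
by [].
Qed.

Lemma Minf_hit Pt : M_infinite Pt <-> forall n, ~~ hit Pt n 1 1.
Proof.
have h0 : xi_alive Pt 0 = ((0.+1)%:Z, true) by [].
split => H n.
  rewrite -(xi_hit n h0) add0n negbK.
  have [_ H2] := xa_inv Pt n; apply/negPn/negP => /H2.
  by move: (H n); rewrite /xi => /eqP.
have := H n; rewrite -(xi_hit n h0) add0n negbK => a.
have [H1 _] := xa_inv Pt n.
by rewrite /xi; have [k' ->] := H1 a.
Qed.

Section prob.
Context d (T : measurableType d) (R : realType) (P : probability T R)
  (X : nat -> R -> T -> nat) (t lam : R).
Hypothesis lam0 : 0 < lam.
Hypothesis mX : forall n k, measurable [set w | X n t w = k].
Hypothesis HC : forall N (c : nat -> nat),
  P (\big[setI/setT]_(l < N) [set w | X l t w = c l]) =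
  (\prod_(l < N) poisson_pmf lam (c l))%:E.

Definition Ev n k i := [set w | hit (fun l => X l t w) n k i].
Definition Cs (c : nat -> nat) i := \big[setI/setT]_(l < i) [set w | X l t w = c l].

Lemma mCs c i : measurable (Cs c i).
Proof. by apply: bigsetI_measurable => l _; exact: mX. Qed.

Lemma Ev_S n k i : Ev n.+1 k.+1 i =
  \bigcup_j ([set w | X i t w = j] `&` Ev n (k + j)%N i.+1).
Proof.
apply/seteqP; split => w /=.
  by move=> h; exists (X i t w) => //.
by move=> [j _ [<- h]].
Qed.

Lemma mEv n k i : measurable (Ev n k i).
Proof.
elim: n k i => [|n IH] k i.
  rewrite /Ev /=; case: (k == 0%N).
    by rewrite (_ : [set w | _] = setT) //; apply/seteqP; split => w //.
  by rewrite (_ : [set w | _] = set0) //; apply/seteqP; split => w //.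
case: k => [|k].
  by rewrite /Ev (_ : [set w | _] = setT) //; apply/seteqP; split => w //= _; rewrite hit0.
rewrite Ev_S; apply: bigcupT_measurable => j; apply: measurableI => //; exact: mX.
Qed.

Local Open Scope ereal_scope.

Lemma PEv n k i c : P (Cs c i `&` Ev n k i) =
  (\prod_(l < i) poisson_pmf lam (c l))%:E * F lam n k.
Proof.
elim: n k i c => [|n IH] k i c.
  case: k => [|k].
    rewrite (_ : Ev 0 0 i = setT); last by apply/seteqP; split => w //= _.
    by rewrite setIT HC mule1.
  rewrite (_ : Ev 0 k.+1 i = set0); last by apply/seteqP; split => w //=.
  by rewrite setI0 measure0 /= mule0.
case: k => [|k].
  rewrite (_ : Ev n.+1 0 i = setT); last by apply/seteqP; split => w //= _; rewrite hit0.
  by rewrite setIT HC F_n0 mule1.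
set c' := fun j l => if l == i then j else c l.
have E : Cs c i `&` Ev n.+1 k.+1 i =
    \bigcup_j (Cs (c' j) i.+1 `&` Ev n (k + j)%N i.+1).
  rewrite Ev_S setI_bigcupr; apply: eq_bigcupr => j _.
  rewrite /Cs big_ord_recr /= /c' eqxx -setIA; congr (_ `&` _).
  by apply: eq_bigr => l _; rewrite (ltn_eqF (ltn_ord l)).
rewrite E measure_semi_bigcup; last 3 first.
- by move=> j; apply: measurableI; [exact: mCs|exact: mEv].
- move=> j j' _ _ [w [[/= hw _] [/= hw' _]]].
  rewrite /Cs big_ord_recr /= in hw; rewrite /Cs big_ord_recr /= in hw'.
  case: hw => _ hw; case: hw' => _ hw'.
  by move: hw hw'; rewrite /c' eqxx => <- <-.
- by apply: bigcupT_measurable => j; apply: measurableI; [exact: mCs|exact: mEv].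
under eq_eseriesr => j _.
  rewrite /= IH big_ord_recr /= /c' eqxx.
  have hp : (\prod_(l < i) poisson_pmf lam (if (l : nat) == i then j else c l) =
      \prod_(l < i) poisson_pmf lam (c l))%R.
    by apply: eq_bigr => l _; rewrite (ltn_eqF (ltn_ord l)).
  rewrite hp.
  rewrite EFinM -muleA -/(pe lam j).
  over.
rewrite /= nneseriesZl //; last by move=> j _; rewrite mule_ge0 ?pe_ge0 ?F_ge0.
Qed.

Lemma PE1 n : P (Ev n 1 1) = F lam n 1.
Proof.
have E : Ev n 1 1 = \bigcup_j (Cs (fun _ => j) 1 `&` Ev n 1 1).
  apply/seteqP; split => w /=.
    by move=> h; exists (X 0%N t w) => //; split => //; rewrite /Cs big_ord1.
  by move=> [j _ [_ h]].
rewrite E measure_semi_bigcup; last 3 first.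
- by move=> j; apply: measurableI; [exact: mCs|exact: mEv].
- move=> j j' _ _ [w [[/= hw _] [/= hw' _]]].
  by move: hw hw'; rewrite /Cs !big_ord1 /= => <- <-.
- by apply: bigcupT_measurable => j; apply: measurableI; [exact: mCs|exact: mEv].
under eq_eseriesr => j _.
  rewrite /= PEv big_ord1 (F_fin lam0) muleC.
  over.
rewrite /= nneseriesZl; last by move=> j _; rewrite lee_fin poisson_pmf_ge0.
by rewrite (sum_pe lam0) mule1 -(F_fin lam0).
Qed.

Lemma PA : P [set w | M_infinite (fun n => X n t w)] =
  1 - ereal_sup (range (fun n => F lam n 1)).
Proof.
have A : [set w | M_infinite (fun n => X n t w)] = ~` \bigcup_n Ev n 1 1.
  apply/seteqP; split => w /=.
    by move/Minf_hit => H [n _ hn]; have := H n; rewrite /Ev /= in hn; rewrite hn.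
  move=> H; apply/Minf_hit => n; apply/negP => hn; apply: H; by exists n.
rewrite A probability_setC; last by apply: bigcupT_measurable => n; exact: mEv.
congr (_ - _).
have nd : nondecreasing_seq (fun n => Ev n 1 1).
  by move=> n m nm; rewrite subsetEset => w; exact: hit_mono nm.
have h1 := @nondecreasing_cvg_mu _ _ _ P (fun n => Ev n 1 1) (fun n => mEv n 1 1)
  (bigcupT_measurable _ (fun n => mEv n 1 1)) nd.
have h2 := @ereal_nondecreasing_cvgn R (fun n => F lam n 1)
  (fun n m nm => F_mono lam 1 nm).
have e : P \o (fun n => Ev n 1 1) = (fun n => F lam n 1).
  by apply/funext => n; rewrite /= PE1.
rewrite e in h1.
exact: cvg_unique h1 h2.
Qed.
End prob.
Section main.
Context d (T : measurableType d) (R : realType) (P : probability T R)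
  (rho2 : R) (X : nat -> R -> T -> nat).
Hypothesis r0 : 0 < rho2.
Hypothesis HX : indep_poisson_processes P (2 * rho2) X.

Definition AA t := [set w | M_infinite (fun n => X n t w)].

Lemma mX_t t : 0 <= t -> forall n k, measurable [set w | X n t w = k].
Proof. by case: HX => _ _ _ H _ tt n k; apply: H. Qed.

Lemma HC_t t : 0 < t -> forall N (c : nat -> nat),
  P (\big[setI/setT]_(l < N) [set w | X l t w = c l]) =
  (\prod_(l < N) poisson_pmf (2 * rho2 * t) (c l))%:E.
Proof.
move=> t0 N c; case: HX => Hx0 _ _ _ Hind.
have := Hind N 1%N (fun j => if j is 0%N then 0 else t) (fun n _ => c n) (lexx 0).
have h : forall j, (j < 1)%N -> (if j is 0%N then 0 else t) < (if j.+1 is 0%N then 0 else t).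
  by move=> [|j] //.
move=> /(_ h) E; apply: (eq_trans _ (eq_trans E _)).
  congr (P _); apply: eq_bigr => n _; rewrite big_ord1 /=; apply/seteqP; split => w /=;
  by rewrite Hx0 add0n.
by congr (_%:E); apply: eq_bigr => n _; rewrite big_ord1 /= subr0.
Qed.

Lemma Aeq t : AA t = ~` \bigcup_n Ev X t n 1 1.
Proof.
apply/seteqP; split => w /=.
  by move/Minf_hit => H [n _ hn]; have := H n; rewrite /Ev /= in hn; rewrite hn.
move=> H; apply/Minf_hit => n; apply/negP => hn; apply: H; by exists n.
Qed.

Lemma mA t : 0 <= t -> measurable (AA t).
Proof.
move=> t0; rewrite Aeq; apply: measurableC; apply: bigcupT_measurable => n.
exact: (@mEv d T R X t (mX_t t0) n 1 1).
Qed.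

Lemma Hall s : exists c, [/\ 0 <= c, c < 1, g2 rho2 s = c &
  forall x, 0 < x < 1 -> (s < hh rho2 x <-> c < x)].
Proof.
case: (leP s 0) => s0.
  by have [H1 H2] := g2_neg r0 s0; exists 0; split.
have lam0 : 0 < 2 * rho2 * s by rewrite !mulr_gt0.
have [g [_ g0 g1 fg gmin]] := G_props lam0.
have [H1 H2] := g2_pos r0 s0 (And4 g0 g1 fg gmin).
by exists (1 - g); split => //; lra.
Qed.

Lemma PA_t t : 0 <= t -> P (AA t) = (g2 rho2 t)%:E.
Proof.
move=> t0; have [->|tpos] := eqVneq t 0.
  have [_ ->] := g2_neg r0 (lexx 0).
  rewrite (_ : AA 0 = set0) ?measure0 //; apply/seteqP; split => w //=.
  move/Minf_hit => /(_ 1%N) /=.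
  by case: HX => Hx0 _ _ _ _; rewrite Hx0.
have t0' : 0 < t by rewrite lt_neqAle eq_sym tpos t0.
have lam0 : 0 < 2 * rho2 * t by rewrite !mulr_gt0.
rewrite /AA (PA lam0 (mX_t t0) (HC_t t0')).
have [g [Gg g0 g1 fg gmin]] := G_props lam0.
have [_ ->] := g2_pos r0 t0' (And4 g0 g1 fg gmin).
by rewrite Gg EFinB.
Qed.

Lemma Amono s t : 0 <= s -> s <= t -> AA s `<=` AA t.
Proof.
move=> s0 st w /Minf_hit H; apply/Minf_hit => n; apply/negP => hn.
have := H n; rewrite (hit_monoP (Pt' := fun l => X l t w) _ (leqnn 1)) //.
by move=> l; case: HX => _ Hm _ _ _; apply: Hm.
Qed.

Local Open Scope ereal_scope.

Lemma chi_ge0 w : 0 <= chi X w.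
Proof. by apply: le_ereal_inf_tmp => _ [t [t0 _] <-]; rewrite lee_fin. Qed.

Lemma chi_le_A s w : (0 <= s)%R -> AA s w -> chi X w <= s%:E.
Proof. by move=> s0 h; apply: ereal_inf_lbound; exists s. Qed.

Lemma A_chi s w : chi X w < s%:E -> AA s w.
Proof.
move=> /ereal_inf_lt [_ [t [t0 ht] <-]]; rewrite lte_fin => ts.
exact: (Amono t0 (ltW ts) ht).
Qed.

Lemma chi_le s : (0 <= s)%R ->
  [set w | chi X w <= s%:E] = \bigcap_k AA (s + k.+1%:R^-1)%R.
Proof.
move=> s0; apply/seteqP; split => w /=.
  move=> h k _; apply: A_chi; apply: le_lt_trans h _.
  by rewrite lte_fin ltrDl invr_gt0 ltr0n.
move=> H; apply/lee_addgt0Pr => e e0.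
have [k hk] := @ltr_add_invr R s (s + e)%R ltac:(by rewrite ltrDl).
apply: (le_trans (chi_le_A _ (H k I))).
  by rewrite addr_ge0 // invr_ge0 ler0n.
by rewrite -EFinD lee_fin ltW.
Qed.

Lemma mchi_le s : measurable [set w | chi X w <= s%:E].
Proof.
case: (ltP s 0%R) => s0.
  rewrite (_ : [set w | _] = set0) //; apply/seteqP; split => w //= h.
  by have := le_trans (chi_ge0 w) h; rewrite lee_fin leNgt s0.
rewrite chi_le //; apply: bigcapT_measurable => k; apply: mA.
by rewrite addr_ge0 // invr_ge0 ler0n.
Qed.

Lemma mchi : measurable_fun setT (chi X).
Proof.
apply: (measurability _ (ErealGenOInfty.measurableE R)) => /= _ [_ [r ->] <-].
rewrite setTI (_ : _ @^-1` _ = ~` [set w | chi X w <= r%:E]).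
  exact: measurableC (mchi_le r).
apply/seteqP; split => w /=; rewrite in_itv /= andbT.
  by move=> h; apply/negP; rewrite -ltNge.
by move/negP; rewrite -ltNge.
Qed.

Lemma Pchi_le s : (0 <= s)%R -> P [set w | chi X w <= s%:E] = (g2 rho2 s)%:E.
Proof.
move=> s0; apply/eqP; rewrite eq_le; apply/andP; split.
  apply/lee_addgt0Pr => e e0.
  have [dl dl0 hdl] := g2_right Hall s e0.
  have sub : [set w | chi X w <= s%:E] `<=` AA (s + dl)%R.
    move=> w /= h; apply: A_chi; apply: le_lt_trans h _.
    by rewrite lte_fin ltrDl.
  have sd0 : (0 <= s + dl)%R by rewrite addr_ge0 // ltW.
  apply: (le_trans (le_measure _ (mem_set (mchi_le s)) (mem_set (mA sd0)) sub)).
  change (P (AA (s + dl)%R) <= (g2 rho2 s)%:E + e%:E).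
  by rewrite PA_t // -EFinD lee_fin.
rewrite -PA_t //.
apply: (le_measure _ (mem_set (mA s0)) (mem_set (mchi_le s))).
by move=> w h; exact: chi_le_A.
Qed.

Lemma Pchi_eq s : P [set w | chi X w = s%:E] = 0.
Proof.
have mE : measurable [set w | chi X w = s%:E].
  by have := mchi measurableT (emeasurable_set1 s%:E); rewrite setTI.
case: (ltgtP s 0%R) => s0.
- rewrite (_ : [set w | _] = set0) ?measure0 //; apply/seteqP; split => w //= h.
  by have := chi_ge0 w; rewrite h lee_fin leNgt s0.
- apply/eqP; rewrite eq_le measure_ge0 andbT; apply/lee_addgt0Pr => e e0.
  rewrite add0e.
  have [dl [dl0 dls hdl]] := g2_left r0 Hall s0 e0.
  have sd0 : (0 <= s - dl)%R by rewrite subr_ge0.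
  have sub : [set w | chi X w = s%:E] `<=` [set w | chi X w <= s%:E] `\` AA (s - dl)%R.
    move=> w /= h; split; first by rewrite h.
    move=> hA; have := chi_le_A sd0 hA; rewrite h lee_fin; lra.
  have mD : measurable ([set w | chi X w <= s%:E] `\` AA (s - dl)%R).
    by apply: measurableD; [exact: mchi_le|exact: mA].
  apply: (le_trans (le_measure _ (mem_set mE) (mem_set mD) sub)).
  have hfin : P [set w | chi X w <= s%:E] < +oo.
    by rewrite (le_lt_trans (probability_le1 _ (mchi_le s))) // ltry.
  rewrite (measureD (mchi_le s) (mA sd0) hfin).
  rewrite setIidr; last by move=> w hw; apply: chi_le_A (ltW s0) (Amono sd0 _ hw); rewrite lerBlDr lerDl ltW.
  change (P [set w | chi X w <= s%:E] - P (AA (s - dl)%R) <= e%:E).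
  by rewrite Pchi_le ?(ltW s0) // PA_t // -EFinB lee_fin; lra.
- subst s; apply/eqP; rewrite eq_le measure_ge0 andbT.
  have sub : [set w | chi X w = 0%:E] `<=` [set w | chi X w <= 0%:E].
    by move=> w /= ->.
  apply: (le_trans (le_measure _ (mem_set mE) (mem_set (mchi_le 0)) sub)).
  change (P [set w | chi X w <= 0%:E] <= 0).
  by rewrite Pchi_le // (g2_neg r0 (lexx 0)).2.
Qed.
End main.

Unset Implicit Arguments.
Theorem lemma7p1 (d : measure_display) (T : measurableType d) (R : realType)
    (P : probability T R) (rho2 : R) (X : nat -> R -> T -> nat) :
  0 < rho2 ->
  indep_poisson_processes P (2 * rho2) X ->
  (forall t : R, 0 <= t ->
     measurable [set w | M_infinite (fun n => X n t w)] /\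
     P [set w | M_infinite (fun n => X n t w)] = (g2 rho2 t)%:E) /\
  (measurable_fun [set: T] (chi X) /\
   (forall s : R, 0 <= s -> P [set w | (chi X w <= s%:E)%E] = (g2 rho2 s)%:E) /\
   (forall s : R, P [set w | chi X w = s%:E] = 0%E)).
Proof.
move=> r0 HX; split.
  by move=> t t0; split; [exact: (mA HX t0)|exact: (PA_t r0 HX t0)].
split; first exact: (mchi HX).
by split; [move=> s s0; exact: (Pchi_le r0 HX s0)|move=> s; exact: (Pchi_eq r0 HX)].
Qed.
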